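(* Let $W_1,\dots,W_m\in\mathbb{R}^{n\times n}$ be signed adjacency matrices of signed digraphs $\mathcal{G}_1,\dots,\mathcal{G}_m$ with $W_k\mathbf{1}=W_k^\top\mathbf{1}=\mathbf{1}$ for all $k$. If $\mathbb{W}=\{W_1,\dots,W_m\}$ is a consensus set for the switched system $\mathbf{x}(t+1)=W_{\sigma(t)}\mathbf{x}(t)$, then for every $k$, $W_k$ is eventually doubly stochastic (hence eventually positive) and $\mathcal{G}_k$ is strongly connected.
   Context: $W_k$ are real matrices (entries of any sign); $\mathcal{G}_k$ has an edge from $j$ to $i$ iff $[W_k]_{ij}\neq 0$. $W$ is eventually positive if there is $t_0\in\mathbb{Z}_{\ge0}$ with $W^t$ entrywise positive for all integers $t\ge t_0$; eventually doubly stochastic means eventually positive with $W\mathbf{1}=W^\top\mathbf{1}=\mathbf{1}$. A switching signal is any map $\sigma:\mathbb{Z}_{\ge0}\to\{1,\dots,m\}$. $\mathbb{W}$ is a consensus set if for every switching signal and every $\mathbf{x}(0)$ there is $\alpha\in\mathbb{R}$ with $\lim_{t\to\infty}\mathbf{x}(t)=\alpha\mathbf{1}$. *)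

(* Defs.v *)
From mathcomp Require Import all_boot all_order all_algebra.
From mathcomp Require Import all_classical all_reals all_analysis.
Import Order.TTheory GRing.Theory Num.Theory.
Import numFieldNormedType.Exports.
Set Implicit Arguments. Unset Strict Implicit. Unset Printing Implicit Defensive.
Local Open Scope classical_set_scope.
Local Open Scope ring_scope.

Definition ones (R : realType) (n : nat) : 'cV[R]_n := const_mx 1.

Definition row_col_sums_one (R : realType) (n : nat) (W : 'M[R]_n) : Prop :=
  W *m ones R n = ones R n /\ W^T *m ones R n = ones R n.

Definition eventually_positive (R : realType) (n : nat) (W : 'M[R]_n) : Prop :=
  exists t0 : nat, forall t : nat, (t0 <= t)%N ->
    forall i j : 'I_n, 0 < (W ^+ t) i j.

Definition eventually_doubly_stochastic (R : realType) (n : nat) (W : 'M[R]_n) : Prop :=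
  eventually_positive W /\ row_col_sums_one W.

Definition digraph_edge (R : realType) (n : nat) (W : 'M[R]_n) : rel 'I_n :=
  fun j i => W i j != 0.

Definition strongly_connected (R : realType) (n : nat) (W : 'M[R]_n) : Prop :=
  forall i j : 'I_n, connect (digraph_edge W) i j.

Fixpoint traj (R : realType) (n m : nat) (W : 'I_m -> 'M[R]_n)
  (sigma : nat -> 'I_m) (x0 : 'cV[R]_n) (t : nat) : 'cV[R]_n :=
  match t with
  | 0 => x0
  | t'.+1 => W (sigma t') *m traj W sigma x0 t'
  end.

Definition consensus_set (R : realType) (n m : nat) (W : 'I_m -> 'M[R]_n) : Prop :=
  forall (sigma : nat -> 'I_m) (x0 : 'cV[R]_n),
    exists alpha : R, traj W sigma x0 t @[t --> \oo] --> alpha *: ones R n.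

(* Main.v *)
Require Import Defs.
From mathcomp Require Import all_boot all_order all_algebra.
From mathcomp Require Import all_classical all_reals all_analysis.
Import Order.TTheory GRing.Theory Num.Theory.
From mathcomp Require Import lra.
Import numFieldNormedType.Exports.
Local Open Scope classical_set_scope.
Local Open Scope ring_scope.

Lemma entry_le (R : realType) (p q : nat) (M : 'M[R]_(p, q)) i j :
  `|M i j| <= `|M|.
Proof.
have -> : `|M| = mx_norm M by [].
rewrite mx_normrE.
by apply/bigmax_geP; right; exists (i, j).
Qed.

Lemma traj_const (R : realType) (n m : nat) (W : 'I_m -> 'M[R]_n) k x0 t :
  traj W (fun _ => k) x0 t = W k ^+ t *m x0.
Proof.
elim: t => [|t IH] /=; first by rewrite expr0 mul1mx.
by rewrite IH mulmxA exprS.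
Qed.

Lemma sum_inv (R : realType) (n : nat) (A : 'M[R]_n) (x : 'cV[R]_n) t :
  A^T *m ones R n = ones R n ->
  \sum_i (A ^+ t *m x) i 0 = \sum_i x i 0.
Proof.
move=> HA.
have E : forall y : 'cV[R]_n, \sum_i y i 0 = ((ones R n)^T *m y) 0 0.
  by move=> y; rewrite !mxE; apply: eq_bigr => i _; rewrite !mxE mul1r.
have HA' : (ones R n)^T *m A = (ones R n)^T.
  by rewrite -[A]trmxK -trmx_mul HA.
rewrite !E; congr (_ 0 0).
elim: t => [|t IH]; first by rewrite expr0 mul1mx.
by rewrite exprS mulmxA mulmxA HA' -mulmxA.
Qed.

Lemma path_pow (R : realType) (n : nat) (A : 'M[R]_n) t i j :
  (A ^+ t) j i != 0 -> connect (digraph_edge A) i j.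
Proof.
elim: t j => [|t IH] j.
  rewrite expr0 mxE; case: (eqVneq j i) => [-> _|]; first exact: connect0.
  by rewrite eqxx.
rewrite exprS mxE => H.
have [l Hl] : exists l, A j l * (A ^+ t) l i != 0.
  apply/existsP; move: H; apply: contraLR; rewrite negb_exists negbK => /forallP Hall.
  rewrite big1 // => l _; apply/eqP; move: (Hall l).
  by rewrite negbK.
rewrite mulf_eq0 negb_or in Hl; case/andP: Hl => H1 H2.
apply: connect_trans (IH _ H2) _.
by apply: connect1.
Qed.

Lemma evpos (R : realType) (n : nat) (A : 'M[R]_n) :
  (0 < n)%N -> A^T *m ones R n = ones R n ->
  (forall x0 : 'cV[R]_n, exists a : R,
     A ^+ t *m x0 @[t --> \oo] --> a *: ones R n) ->
  \forall t \near \oo, forall j i, 0 < (A ^+ t) i j.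
Proof.
move=> n0 HA Hc.
apply: filter_forall => j.
have [a Ha] := Hc (delta_mx j 0).
pose N : R := n%:R.
have N0 : 0 < N by rewrite ltr0n.
pose e : R := (2 * N)^-1.
have e0 : 0 < e by rewrite invr_gt0 mulr_gt0.
have eN : e * N = 2^-1 by rewrite /e invfM -mulrA mulVf ?mulr1 // gt_eqF.
move/cvgrPdist_lt: Ha => /(_ e e0).
apply: filterS => t Ht.
set v := A ^+ t *m delta_mx j 0 in Ht.
have vE : forall i, v i 0 = (A ^+ t) i j.
  by move=> i; rewrite /v -colE mxE.
have Hi : forall i, `|a - v i 0| < e.
  move=> i; apply: le_lt_trans Ht.
  have H1 := @entry_le _ _ _ (a *: ones R n - v) i 0.
  have E1 : (a *: ones R n - v) i 0 = a - v i 0 by rewrite !mxE mulr1.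
  by rewrite -E1.
have S1 : \sum_i v i 0 = 1.
  rewrite /v sum_inv // (bigD1 j) //= big1 ?mxE ?eqxx ?addr0 //.
  by move=> i /negPf Hij; rewrite mxE Hij.
have S2 : \sum_i (v i 0 - a) <= \sum_(i < n) e.
  apply: ler_sum => i _; apply: le_trans (ltW (Hi i)).
  by rewrite distrC ler_norm.
have E2 : \sum_i (v i 0 - a) = 1 - a *+ n.
  rewrite sumrB S1; congr (_ - _).
  by rewrite sumr_const card_ord.
have E3 : \sum_(i < n) e = e *+ n.
  by rewrite sumr_const card_ord.
rewrite E2 E3 in S2.
have aN : a *+ n = a * N by rewrite /N mulr_natr.
have eN' : e *+ n = 2^-1 by rewrite -eN /N mulr_natr.
rewrite aN eN' in S2.
have ae : 0 <= a - e.
  have : 0 <= (a - e) * N by rewrite mulrBl eN; lra.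
  by rewrite pmulr_lge0.
move=> i; rewrite -vE.
have := Hi i; rewrite ltr_norml; lra.
Qed.

Theorem corollary5 (R : realType) (n m : nat) (W : 'I_m -> 'M[R]_n) :
  (forall k : 'I_m, row_col_sums_one (W k)) ->
  consensus_set W ->
  forall k : 'I_m,
    eventually_doubly_stochastic (W k) /\ eventually_positive (W k) /\
    strongly_connected (W k).
Proof.
move=> Hs Hc k.
have [H1 H2] := Hs k.
suff [EP SC] : eventually_positive (W k) /\ strongly_connected (W k).
  by split; [split|split].
case: n W Hs Hc k H1 H2 => [|n'] W Hs Hc k H1 H2.
  by split; [exists 0%N => t _ [] | move=> []].
have Hc' : forall x0 : 'cV[R]_n'.+1, exists a : R,
    W k ^+ t *m x0 @[t --> \oo] --> a *: ones R n'.+1.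
  move=> x0; have [a Ha] := Hc (fun _ => k) x0; exists a.
  have -> : (fun t => W k ^+ t *m x0) = traj W (fun _ => k) x0.
    by apply: funext => t; rewrite traj_const.
  exact: Ha.
have [N _ HN] := @evpos _ _ _ (ltn0Sn n') H2 Hc'.
split; first by exists N => t Ht i j; exact: (HN t Ht).
move=> i j; apply: (@path_pow _ _ _ N); apply: lt0r_neq0.
exact: (HN N (leqnn N) i j).
Qed.
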